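(* Let $\Phi$ be a potential-inner automorphism of $\mathcal C$, witnessed by bijections $s_A:A\to\Phi(A)$ with $\Phi(\mu)=s_B\circ\mu\circ s_A^{-1}$ for all morphisms $\mu:A\to B$ of $\mathcal C$. For each object $A$, let $A^*$ denote the algebra on the underlying set of $\Phi(A)$ obtained by transporting the structure of $A$ along $s_A$, so that $s_A:A\to A^*$ is an isomorphism. Then $\Phi$ is inner if and only if there exists a central function $A\mapsto c_A$ on $\mathcal C$ such that, for every object $A$, the map $c_{\Phi(A)}$ is an isomorphism of the algebra $\Phi(A)$ onto the algebra $A^*$.
   Context: Let $\mathcal V$ be a variety of universal algebras, and let $\mathcal C$ be a full subcategory of the category $\Theta(\mathcal V)$ of all $\mathcal V$-algebras and homomorphisms, containing a free $\mathcal V$-algebra on one generator. An automorphism $\Phi$ of $\mathcal C$ is potential-inner if there are bijections of underlying sets $s_A:A\to\Phi(A)$ with $\Phi(\mu)=s_B\circ\mu\circ s_A^{-1}$ for every morphism $\mu:A\to B$. It is inner if such $s_A$ can be chosen to be algebra isomorphisms. A central function on $\mathcal C$ assigns to every object $A$ a permutation $c_A$ of its underlying set such that $c_B\circ\nu\circ c_A^{-1}=\nu$ for every morphism $\nu:A\to B$ of $\mathcal C$. *)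

(* Defs.v *)
From mathcomp Require Import all_boot.
Unset Implicit Arguments.
Unset Strict Implicit.
Unset Printing Implicit Defensive.

Record signature := Signature { sym : Type; arity : sym -> nat }.
Arguments arity s _ : clear implicits.

Section UA.
Variable S : signature.

Record algebra := Algebra {
  carrier :> Type;
  interp : forall o : sym S, ('I_(arity S o) -> carrier) -> carrier }.

Definition is_hom (A B : algebra) (f : A -> B) : Prop :=
  forall (o : sym S) (args : 'I_(arity S o) -> A),
    f (interp A o args) = interp B o (fun i => f (args i)).

Definition is_iso (A B : algebra) (f : A -> B) : Prop :=
  bijective f /\ is_hom A B f.

Inductive term : Type :=
  | Var of nat
  | App (o : sym S) of ('I_(arity S o) -> term).

Fixpoint eval (A : algebra) (v : nat -> A) (t : term) : A :=
  match t with
  | Var n => v n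
  | App o args => interp A o (fun i => eval A v (args i))
  end.

(* A variety is given by a set of identities (pairs of terms). *)
Definition variety := (term * term)%type -> Prop.

Definition in_variety (V : variety) (A : algebra) : Prop :=
  forall e, V e -> forall v : nat -> A, eval A v e.1 = eval A v e.2.

Definition free_on_one (V : variety) (F : algebra) (x : F) : Prop :=
  in_variety V F /\
  forall B : algebra, in_variety V B -> forall b : B,
    (exists h : F -> B, is_hom F B h /\ h x = b) /\
    (forall h1 h2 : F -> B, is_hom F B h1 -> is_hom F B h2 ->
        h1 x = b -> h2 x = b -> h1 =1 h2).

Definition transport (A : algebra) (B : Type) (s : A -> B) (sinv : B -> A)
  : algebra :=
  @Algebra B (fun o args => s (interp A o (fun i => sinv (args i)))).

(* A full subcategory is given by its class of objects (a predicate on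
   algebras); its morphisms are all homomorphisms. *)
Section FullSub.
Variable C : algebra -> Prop.

Definition Obj := {A : algebra | C A}.
Definition oalg (X : Obj) : algebra := proj1_sig X.

Definition hom (X Y : Obj) := {f : oalg X -> oalg Y | is_hom (oalg X) (oalg Y) f}.

Lemma id_is_hom (X : Obj) : is_hom (oalg X) (oalg X) (fun x => x).
Proof. by []. Qed.

Definition id_hom (X : Obj) : hom X X := exist _ (fun x => x) (id_is_hom X).

Lemma comp_is_hom {X Y Z : Obj} (g : hom Y Z) (f : hom X Y) :
  is_hom (oalg X) (oalg Z) (fun x => proj1_sig g (proj1_sig f x)).
Proof.
move=> o args /=; rewrite (proj2_sig f) (proj2_sig g) //.
Qed.

Definition comp_hom {X Y Z : Obj} (g : hom Y Z) (f : hom X Y) : hom X Z :=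
  exist _ _ (comp_is_hom g f).

Record functor := Functor {
  Fo : Obj -> Obj;
  Fm : forall {X Y : Obj}, hom X Y -> hom (Fo X) (Fo Y);
  Fm_id : forall X, proj1_sig (Fm (id_hom X)) =1 proj1_sig (id_hom (Fo X));
  Fm_comp : forall X Y Z (g : hom Y Z) (f : hom X Y),
      proj1_sig (Fm (comp_hom g f)) =1 proj1_sig (comp_hom (Fm g) (Fm f)) }.

(* An automorphism (isomorphism of categories C -> C): a functor that is
   bijective on objects and on every hom-set. *)
Definition automorphism (Phi : functor) : Prop :=
  bijective (Fo Phi) /\ forall X Y : Obj, bijective (@Fm Phi X Y).

(* Witness of potential-innerness: bijections s_X : X -> Phi(X) (with inverse
   sinv_X) such that Phi(mu) = s_Y o mu o s_X^{-1}. *)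
Record pi_witness (Phi : functor) := PiWitness {
  s : forall X : Obj, oalg X -> oalg (Fo Phi X);
  sinv : forall X : Obj, oalg (Fo Phi X) -> oalg X;
  sK : forall X, cancel (s X) (sinv X);
  sinvK : forall X, cancel (sinv X) (s X);
  s_nat : forall (X Y : Obj) (mu : hom X Y),
      proj1_sig (Fm Phi mu) =1 (fun y => s Y (proj1_sig mu (sinv X y))) }.

Arguments s {Phi} p X x.
Arguments sinv {Phi} p X y.

Definition potential_inner (Phi : functor) : Prop := inhabited (pi_witness Phi).

Definition inner (Phi : functor) : Prop :=
  exists w : pi_witness Phi,
    forall X : Obj, is_iso (oalg X) (oalg (Fo Phi X)) (s w X).

Definition Astar (Phi : functor) (w : pi_witness Phi) (X : Obj) : algebra :=
  @transport (oalg X) (oalg (Fo Phi X)) (s w X) (sinv w X).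

Record central_function := CentralFunction {
  c : forall X : Obj, oalg X -> oalg X;
  cinv : forall X : Obj, oalg X -> oalg X;
  cK : forall X, cancel (c X) (cinv X);
  cinvK : forall X, cancel (cinv X) (c X);
  c_central : forall (X Y : Obj) (nu : hom X Y),
      (fun x => c Y (proj1_sig nu (cinv X x))) =1 proj1_sig nu }.

End FullSub.
End UA.
Arguments Fo {S C} _ _.
Arguments Fm {S C} _ {X Y} _.
Arguments s {S C Phi} _ _ _.
Arguments sinv {S C Phi} _ _ _.
Arguments c {S C} _ _ _.
Arguments cinv {S C} _ _ _.
Arguments oalg {S C} X.
Arguments in_variety {S} V A.
Arguments free_on_one {S} V F x.
Arguments is_iso {S} A B f.
Arguments is_hom {S} A B f.
Arguments inner {S C} Phi.
Arguments potential_inner {S C} Phi.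
Arguments automorphism {S C} Phi.
Arguments Astar {S C Phi} w X.
Arguments interp {S} a o _.

(* Main.v *)
Require Import Defs.
From mathcomp Require Import all_boot.
From Stdlib Require Import ProofIrrelevance FunctionalExtensionality.
Notation funext := functional_extensionality.

Definition castf {S C} {Phi : functor S C} (w w' : pi_witness S C Phi)
  (X Y : Obj S C) (e : Fo Phi X = Y) : oalg Y -> oalg Y :=
  match e in _ = Y return oalg Y -> oalg Y with
  | erefl => fun y => s w X (sinv w' X y) end.

Definition castfinv {S C} {Phi : functor S C} (w w' : pi_witness S C Phi)
  (X Y : Obj S C) (e : Fo Phi X = Y) : oalg Y -> oalg Y :=
  match e in _ = Y return oalg Y -> oalg Y with
  | erefl => fun y => s w' X (sinv w X y) end.

Lemma castK {S C} {Phi : functor S C} (w w' : pi_witness S C Phi) X Y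
  (e : Fo Phi X = Y) : cancel (castf w w' X Y e) (castfinv w w' X Y e).
Proof. destruct e => y /=; by rewrite sK sinvK. Qed.

Lemma castinvK {S C} {Phi : functor S C} (w w' : pi_witness S C Phi) X Y
  (e : Fo Phi X = Y) : cancel (castfinv w w' X Y e) (castf w w' X Y e).
Proof. destruct e => y /=; by rewrite sK sinvK. Qed.

Lemma castcent {S C} {Phi : functor S C} (w w' : pi_witness S C Phi)
  (Hm : forall X Y : Obj S C, bijective (@Fm _ _ Phi X Y))
  X1 X2 Y Z (e1 : Fo Phi X1 = Y) (e2 : Fo Phi X2 = Z) (nu : hom S C Y Z) :
  (fun x => castf w w' X2 Z e2 (proj1_sig nu (castfinv w w' X1 Y e1 x)))
    =1 proj1_sig nu.
Proof.
destruct e1, e2 => x /=.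
case: (Hm X1 X2) => g _ gK.
rewrite -(gK nu) (s_nat _ _ _ w') !sK (s_nat _ _ _ w).
by [].
Qed.

Theorem mainTheorem3 (S : signature) (V : variety S) (C : algebra S -> Prop)
  (HC : forall A, C A -> in_variety V A)
  (Hfree : exists (F : algebra S) (x : F), C F /\ free_on_one V F x)
  (Phi : functor S C) (Haut : automorphism Phi) (w : pi_witness S C Phi) :
  inner Phi <->
  exists cf : central_function S C,
    forall X : Obj S C,
      is_iso (oalg (Fo Phi X)) (Astar w X) (c cf (Fo Phi X)).
Proof.
case: Haut => [[g gK Kg] Hm]; split.
- case=> w' Hw'.
  exists (@CentralFunction S C
     (fun Y => castf w w' (g Y) Y (Kg Y))
     (fun Y => castfinv w w' (g Y) Y (Kg Y))
     (fun Y => castK w w' _ _ _) (fun Y => castinvK w w' _ _ _)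
     (fun Y Z nu => castcent w w' Hm _ _ _ _ _ _ nu)).
  move=> X0 /=.
  move: (Kg (Fo Phi X0)); have := gK X0; move: (g (Fo Phi X0)) => X1 h.
  subst X1 => e; rewrite (proof_irrelevance _ e erefl) /=.
  have [_ hw'] := Hw' X0.
  have hinv : forall o args, sinv w' X0 (interp (oalg (Fo Phi X0)) o args)
      = interp (oalg X0) o (fun i => sinv w' X0 (args i)).
    move=> o args.
    rewrite -{1}(_ : (fun i => s w' X0 (sinv w' X0 (args i))) = args);
      last by apply: funext => i; rewrite sinvK.
    by rewrite -hw' sK.
  split.
  + exists (fun y => s w' X0 (sinv w X0 y)) => y /=; by rewrite ?sK ?sinvK.
  + move=> o args /=; rewrite hinv; congr (s w X0 (interp _ o _)).
    by apply: funext => i; rewrite sK.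
- case=> cf Hcf.
  pose sw := fun X x => cinv cf (Fo Phi X) (s w X x).
  pose swi := fun X y => sinv w X (c cf (Fo Phi X) y).
  have nat' : forall (X Y : Obj S C) (mu : hom S C X Y),
      proj1_sig (Fm Phi mu) =1 (fun y => sw Y (proj1_sig mu (swi X y))).
    move=> X Y mu y; rewrite /sw /swi.
    rewrite -(s_nat _ _ _ w X Y mu (c cf (Fo Phi X) y)).
    have := c_central _ _ cf (Fo Phi X) (Fo Phi Y) (Fm Phi mu) (c cf (Fo Phi X) y).
    by rewrite /= cK => <-; rewrite cK.
  have h1 : forall X, cancel (sw X) (swi X).
    by move=> X x; rewrite /sw /swi cinvK sK.
  have h2 : forall X, cancel (swi X) (sw X).
    by move=> X x; rewrite /sw /swi sinvK cK.
  exists (@PiWitness S C Phi sw swi h1 h2 nat').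
  move=> X /=; have [[ci ciK Kci] hc] := Hcf X.
  split.
  + by exists (swi X) => x; rewrite /sw /swi ?cinvK ?sK ?sinvK ?cK.
  + move=> o args; rewrite /sw.
    have -> : interp (oalg (Fo Phi X)) o (fun i => cinv cf (Fo Phi X) (s w X (args i)))
       = cinv cf (Fo Phi X) (c cf (Fo Phi X) (interp (oalg (Fo Phi X)) o
            (fun i => cinv cf (Fo Phi X) (s w X (args i))))) by rewrite cK.
    rewrite hc /=; congr (cinv _ _ (s w X (interp _ o _))).
    by apply: funext => i; rewrite cinvK sK.
Qed.
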